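(* Let $p\in\mathbb{R}^d$ with $p\neq 0$, put $\hat p=p/\lVert p\rVert$, let $c=\hat c_{\hat p}$ be the class predicted for $\hat p$, and let $c'$ be the class in $\{0,\dots,k-1\}\setminus\{c\}$ with the highest value of $P(\hat c_{\hat p}=c')$. Define $$\epsilon_c=\sqrt{1+\frac{1}{2d}\Big(\hat p^T M^c\hat p-\hat p^T M^{c'}\hat p\Big)}-1,$$ and suppose $\epsilon_c>0$. If $$\lVert p\rVert\ \ge\ \frac{2}{\epsilon_c\sqrt{4-\epsilon_c^2}},$$ then for every $x\in\mathbb{R}^d$ with $\lVert x\rVert=1$, the normalized perturbed input $y=\frac{p+x}{\lVert p+x\rVert}$ is classified as $c$. That is, $P(\hat c_y=c)\ge P(\hat c_y=\tilde c)$ for all $\tilde c\in\{0,\dots,k-1\}$, so $c$ attains the maximum defining $\hat c_y$.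
   Context: Setting (noiseless PQC classifier acting on amplitude-encoded real data). We use the following notation. - $D\ge 0$ and $K\ge 0$ are integers. Put $d=2^D$, $k'=2^K$ and $n=2^{D+K}$. The number of classes $k$ satisfies $1\le k\le k'$. - $U\in\mathbb{C}^{n\times n}$ is a fixed unitary matrix, and $\lVert\cdot\rVert$ denotes the Euclidean norm. - All vectors and matrices are indexed from $0$. - For a unit vector $x\in\mathbb{R}^d$, let $e_0\in\mathbb{C}^{k'}$ be the first standard basis vector, and let $y=U(x\otimes e_0)\in\mathbb{C}^n$. Here $(x\otimes e_0)_{k's}=x_s$ and all other entries of $x\otimes e_0$ are $0$. - For $c\in\{0,\dots,k-1\}$, define the class-$c$ probability $P(\hat c_x=c)=\sum_{t=0}^{d-1}\lvert y_{k't+c}\rvert^2$. This is the probability that measuring the ancillary register gives $c$. - The predicted class is $\hat c_x=\arg\max_{c\in\{0,\dots,k-1\}}P(\hat c_x=c)$. - For each $c$, the $d\times d$ matrix $M^c$ is defined by $M^c_{ij}=\sum_{t=0}^{d-1}U^*_{k't+c,\,k'i}\,U_{k't+c,\,k'j}$, where $^*$ denotes complex conjugation. *)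

(* Defs.v *)
From HB Require Import structures.
From mathcomp Require Import all_boot all_order all_algebra.
From mathcomp Require Import spectral.
From mathcomp Require Import complex.
Set Implicit Arguments. Unset Strict Implicit. Unset Printing Implicit Defensive.
Import Order.TTheory GRing.Theory Num.Theory.
Local Open Scope ring_scope.

Section Defs.
Variable R : rcfType.
Local Notation C := R[i].

(* Entry (i, j) of a matrix, with 0-based natural-number indices
   (the unique entry whose row index is i and column index is j). *)
Definition mxat {T : nmodType} m n (A : 'M[T]_(m, n)) (i j : nat) : T :=
  \sum_(a < m | val a == i) \sum_(b < n | val b == j) A a b.

(* x (tensor) e_0, embedded as a complex vector: entry k' s is x_s, others 0. *)
Definition embed (D K : nat) (x : 'cV[R]_(2 ^ D)) : 'cV[C]_(2 ^ (D + K)) :=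
  \col_(j < 2 ^ (D + K)) \sum_(s < 2 ^ D | (2 ^ K * s)%N == val j) ((x s 0)%:C)%C.

Definition outstate (D K : nat) (U : 'M[C]_(2 ^ (D + K))) (x : 'cV[R]_(2 ^ D))
  : 'cV[C]_(2 ^ (D + K)) := U *m embed K x.

Definition prob (D K : nat) (U : 'M[C]_(2 ^ (D + K))) (x : 'cV[R]_(2 ^ D))
  (c : nat) : R :=
  \sum_(t < 2 ^ D) ComplexField.Normc.normc (mxat (outstate U x) (2 ^ K * t + c) 0) ^+ 2.

Definition Mc (D K : nat) (U : 'M[C]_(2 ^ (D + K))) (c : nat) : 'M[C]_(2 ^ D) :=
  \matrix_(i < 2 ^ D, j < 2 ^ D)
    \sum_(t < 2 ^ D) Num.conj (mxat U (2 ^ K * t + c) (2 ^ K * i))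
                     * mxat U (2 ^ K * t + c) (2 ^ K * j).

(* q^T M q for a real vector q (a real number since M is Hermitian;
   we take the real part). *)
Definition qform (d : nat) (M : 'M[C]_d) (q : 'cV[R]_d) : R :=
  complex.Re (\sum_(i < d) \sum_(j < d) ((q i 0)%:C)%C * M i j * ((q j 0)%:C)%C).

Definition vnorm (d : nat) (q : 'cV[R]_d) : R := Num.sqrt (\sum_(i < d) q i 0 ^+ 2).
Definition normalize (d : nat) (q : 'cV[R]_d) : 'cV[R]_d := (vnorm q)^-1 *: q.

End Defs.

(* Main.v *)
Require Import Defs.
From HB Require Import structures.
From mathcomp Require Import all_boot all_order all_algebra.
From mathcomp Require Import spectral.
From mathcomp Require Import complex.
From mathcomp Require Import zify ring lra.
Import Order.TTheory GRing.Theory Num.Theory.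
Local Open Scope ring_scope.
Section Aux.
Variable R : rcfType.
Local Notation C := R[i].

Lemma mxat_ord {T : nmodType} m n (A : 'M[T]_(m, n)) (i : 'I_m) (j : 'I_n) :
  mxat A i j = A i j.
Proof.
rewrite /mxat (eq_bigl (pred1 i)) => [|a]; last by rewrite /= val_eqE.
rewrite big_pred1_eq (eq_bigl (pred1 j)) => [|b]; last by rewrite /= val_eqE.
by rewrite big_pred1_eq.
Qed.

Lemma normc_sq (z : C) : ComplexField.Normc.normc z ^+ 2 = complex.Re z ^+ 2 + complex.Im z ^+ 2.
Proof. by case: z => a b /=; rewrite sqr_sqrtr // addr_ge0 // sqr_ge0. Qed.

Lemma normc_sq_ge0 (z : C) : 0 <= ComplexField.Normc.normc z ^+ 2.
Proof. by rewrite sqr_ge0. Qed.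

Lemma ReJM (z : C) : complex.Re (Num.conj z * z) = ComplexField.Normc.normc z ^+ 2.
Proof. rewrite normc_sq; case: z => a b /=; ring. Qed.

Lemma conj_real (a : R) : Num.conj ((a%:C)%C : C) = (a%:C)%C.
Proof. by rewrite /= /conjc /=; congr (_ +i* _)%C; rewrite oppr0. Qed.

Lemma Re_sum (I : finType) (P : pred I) (F : I -> C) :
  complex.Re (\sum_(i | P i) F i) = \sum_(i | P i) complex.Re (F i).
Proof. by apply: (big_morph _ (fun x y => raddfD _ x y)); rewrite raddf0. Qed.

End Aux.
Arguments normc_sq {R} z.
Arguments normc_sq_ge0 {R} z.
Arguments ReJM {R} z.
Arguments conj_real {R} a.
Section Expand.
Variable R : rcfType.
Local Notation C := R[i].
Variables (D K : nat) (U : 'M[C]_(2 ^ (D + K))).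

Definition W (q : 'cV[R]_(2 ^ D)) (i : nat) : C :=
  \sum_(s < 2 ^ D) mxat U i (2 ^ K * s) * ((q s 0)%:C)%C.

Lemma outstate_expand (q : 'cV[R]_(2 ^ D)) i :
  mxat (outstate U q) i 0 = W q i.
Proof.
rewrite /mxat /outstate /W.
under eq_bigr => a _.
  rewrite big_mkcond big_ord1 /= mxE.
  under eq_bigr => j _ do rewrite mxE big_mkcond big_distrr /=.
  rewrite exchange_big /=.
  over.
rewrite exchange_big /=; apply: eq_bigr => s _.
rewrite big_distrl /=; apply: eq_bigr => a _.
rewrite big_distrl /=; rewrite [RHS]big_mkcond /=; apply: eq_bigr => j _.
by rewrite eq_sym; case: eqP => _; rewrite ?mulr0 ?mul0r.
Qed.
End Expand.
Arguments W {R D K} U q i.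
Section Prob.
Variable R : rcfType.
Local Notation C := R[i].
Local Notation nc := (@ComplexField.Normc.normc R).
Variables (D K : nat) (U : 'M[C]_(2 ^ (D + K))).

Lemma WD (p x : 'cV[R]_(2 ^ D)) i : W U (p + x) i = W U p i + W U x i.
Proof.
rewrite /W -big_split /=; apply: eq_bigr => s _.
by rewrite mxE rmorphD mulrDr.
Qed.

Lemma WZ (a : R) (q : 'cV[R]_(2 ^ D)) i : W U (a *: q) i = (a%:C)%C * W U q i.
Proof.
rewrite /W big_distrr /=; apply: eq_bigr => s _.
by rewrite mxE rmorphM /=; ring.
Qed.

Lemma probE (q : 'cV[R]_(2 ^ D)) c :
  prob U q c = \sum_(t < 2 ^ D) nc (W U q (2 ^ K * t + c)) ^+ 2.
Proof. by rewrite /prob; apply: eq_bigr => t _; rewrite outstate_expand. Qed.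

Lemma qformE (q : 'cV[R]_(2 ^ D)) c : qform (Mc U c) q = prob U q c.
Proof.
rewrite probE /qform.
under [RHS]eq_bigr => t _ do rewrite -ReJM.
rewrite -Re_sum; congr (complex.Re _).
under [RHS]eq_bigr => t _.
  rewrite /W rmorph_sum big_distrl /=.
  under eq_bigr => i _ do rewrite big_distrr /=.
  over.
rewrite /= [RHS]exchange_big /=; apply: eq_bigr => i _.
rewrite [RHS]exchange_big /=; apply: eq_bigr => j _.
rewrite mxE big_distrr big_distrl /=; apply: eq_bigr => t _.
rewrite rmorphM /= conj_real; ring.
Qed.

Lemma prob_ge0 (q : 'cV[R]_(2 ^ D)) c : 0 <= prob U q c.
Proof. by rewrite probE; apply: sumr_ge0 => t _; apply: normc_sq_ge0. Qed.

Lemma probZ (a : R) (q : 'cV[R]_(2 ^ D)) c : prob U (a *: q) c = a ^+ 2 * prob U q c.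
Proof.
rewrite !probE big_distrr /=; apply: eq_bigr => t _.
rewrite WZ ComplexField.Normc.normcM exprMn /=; congr (_ * _).
by rewrite expr0n /= addr0 sqr_sqrtr // sqr_ge0.
Qed.
End Prob.
Arguments WD {R D K} U p x i.
Arguments WZ {R D K} U a q i.
Arguments probE {R D K} U q c.
Arguments qformE {R D K} U q c.
Arguments prob_ge0 {R D K} U q c.
Arguments probZ {R D K} U a q c.
Section Unit.
Variable R : rcfType.
Local Notation C := R[i].
Local Notation nc := (@ComplexField.Normc.normc R).
Local Open Scope sesquilinear_scope.
Variables (D K : nat) (U : 'M[C]_(2 ^ (D + K))).

Lemma sum_inj_sq (I : finType) (g : I -> nat) (f : I -> R) j :
  injective g -> (\sum_(s | g s == j) f s) ^+ 2 = \sum_(s | g s == j) f s ^+ 2.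
Proof.
move=> ig; case: (pickP (fun s => g s == j)) => [s0 /eqP Hs0 | H].
  have P1 : (fun s => g s == j) =1 pred1 s0.
    by move=> s /=; apply/eqP/eqP => [E|->//]; apply: ig; rewrite E.
  by rewrite (eq_bigl _ _ P1) [in RHS](eq_bigl _ _ P1) !big_pred1_eq.
by rewrite !big_pred0 // expr0n.
Qed.

Lemma shift_lt (c : nat) (t : 'I_(2 ^ D)) : (c < 2 ^ K)%N -> (2 ^ K * t + c < 2 ^ (D + K))%N.
Proof.
move=> hc; rewrite expnD [(2 ^ D * _)%N]mulnC.
apply: (@leq_trans (2 ^ K * t + 2 ^ K)); first by rewrite ltn_add2l.
by rewrite -mulnSr leq_mul2l ltn_ord orbT.
Qed.

Lemma norm_total (q : 'cV[R]_(2 ^ D)) : U \is unitarymx ->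
  \sum_(r < 2 ^ (D + K)) nc (outstate U q r 0) ^+ 2 = \sum_(s < 2 ^ D) q s 0 ^+ 2.
Proof.
move=> hU.
set z := outstate U q.
have E1 : \sum_(r < 2 ^ (D + K)) nc (z r 0) ^+ 2 = complex.Re ((z ^t* *m z) 0 0).
  rewrite mxE Re_sum; apply: eq_bigr => r _.
  by rewrite !mxE ReJM.
rewrite E1 /z /outstate.
have -> : (U *m embed K q) ^t* *m (U *m embed K q) = (embed K q) ^t* *m (embed K q).
  rewrite trmx_mul map_mxM -mulmxA (mulmxA (U ^t*)).
  by have := mulmxKtV (1%:M) hU erefl; rewrite mul1mx => ->; rewrite mul1mx.
rewrite mxE Re_sum.
under eq_bigr => j _.
  rewrite !mxE -rmorph_sum conj_real -rmorphM /=.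
  rewrite -expr2 sum_inj_sq; last by move=> a b /eqP; rewrite eqn_pmul2l ?expn_gt0 // => /eqP /val_inj.
  over.
rewrite /= (exchange_big_dep xpredT) //=; apply: eq_bigr => s _.
have h0 : (0 < 2 ^ K)%N by rewrite expn_gt0.
rewrite (eq_bigl (pred1 (Ordinal (shift_lt 0 s h0)))) ?big_pred1_eq // => j /=.
by rewrite eq_sym -val_eqE /= addn0.
Qed.
End Unit.
Arguments norm_total {R D K U} q _.
Section Sub.
Variable R : rcfType.
Local Notation C := R[i].
Local Notation nc := (@ComplexField.Normc.normc R).
Variables (D K : nat) (U : 'M[C]_(2 ^ (D + K))).

Lemma sum_uniq {T : nmodType} (I : finType) (P : pred I) (F : I -> T) :
  (forall i j, P i -> P j -> i = j) ->
  \sum_(i | P i) F i = if [pick i | P i] is Some i0 then F i0 else 0.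
Proof.
move=> uP; case: pickP => [i0 Hi0 | H].
  rewrite (eq_bigl (pred1 i0)) ?big_pred1_eq // => i /=.
  by apply/idP/eqP => [Pi|->//]; apply: uP.
by rewrite big_pred0.
Qed.

Lemma nc_mxat (z : 'cV[C]_(2 ^ (D + K))) (i : nat) :
  nc (mxat z i 0) ^+ 2 = \sum_(r < 2 ^ (D + K) | val r == i) nc (z r 0) ^+ 2.
Proof.
have uP : forall a b : 'I_(2 ^ (D + K)), val a == i -> val b == i -> a = b.
  by move=> a b /eqP ha /eqP hb; apply: val_inj; rewrite ha hb.
rewrite /mxat (sum_uniq _ _ _ uP) (sum_uniq _ _ _ uP).
case: pickP => [r0 _ | _]; last by rewrite ComplexField.Normc.normc0 expr0n.
by rewrite big_mkcond big_ord1.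
Qed.

Lemma probS (q : 'cV[R]_(2 ^ D)) c :
  prob U q c = \sum_(r < 2 ^ (D + K))
     \sum_(t < 2 ^ D | val r == (2 ^ K * t + c)%N) nc (outstate U q r 0) ^+ 2.
Proof.
rewrite /prob; under eq_bigr => t _ do rewrite nc_mxat.
by rewrite (exchange_big_dep xpredT).
Qed.

Lemma prob2_le (q : 'cV[R]_(2 ^ D)) (c1 c2 : nat) :
  (c1 < 2 ^ K)%N -> (c2 < 2 ^ K)%N -> c1 != c2 -> U \is unitarymx ->
  prob U q c1 + prob U q c2 <= \sum_(s < 2 ^ D) q s 0 ^+ 2.
Proof.
move=> h1 h2 h12 hU; rewrite -(norm_total q hU) !probS -big_split /=.
apply: ler_sum => r _.
have uP : forall c, forall a b : 'I_(2 ^ D),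
   val r == (2 ^ K * a + c)%N -> val r == (2 ^ K * b + c)%N -> a = b.
  move=> c a b /eqP -> /eqP /eqP; rewrite eqn_add2r eqn_pmul2l ?expn_gt0 //.
  by move=> /eqP /val_inj.
rewrite (sum_uniq _ _ _ (uP c1)) (sum_uniq _ _ _ (uP c2)).
have hge := normc_sq_ge0 (outstate U q r 0).
case: pickP => [t1 /eqP E1 | _]; case: pickP => [t2 /eqP E2 | _] //; try lra.
exfalso; move: h12; rewrite -(modn_small h1) -(modn_small h2).
by rewrite -(modnMDl t1 c1) -(modnMDl t2 c2) ![(t1 * _)%N]mulnC ![(t2 * _)%N]mulnC -E1 -E2 eqxx.
Qed.

Lemma prob1_le (q : 'cV[R]_(2 ^ D)) (c1 : nat) : U \is unitarymx ->
  prob U q c1 <= \sum_(s < 2 ^ D) q s 0 ^+ 2.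
Proof.
move=> hU; rewrite -(norm_total q hU) !probS.
apply: ler_sum => r _.
have uP : forall c, forall a b : 'I_(2 ^ D),
   val r == (2 ^ K * a + c)%N -> val r == (2 ^ K * b + c)%N -> a = b.
  move=> c a b /eqP -> /eqP /eqP; rewrite eqn_add2r eqn_pmul2l ?expn_gt0 //.
  by move=> /eqP /val_inj.
rewrite (sum_uniq _ _ _ (uP c1)).
have hge := normc_sq_ge0 (outstate U q r 0).
case: pickP => [t1 _ | _] //.
Qed.
End Sub.
Arguments prob2_le {R D K U} q c1 c2 _ _ _ _.
Arguments prob1_le {R D K U} q c1 _.
Section Real.
Variable R : rcfType.

Lemma disc (A X B : R) : 0 <= A -> (forall l, 0 <= l ^+ 2 * A + 2 * l * X + B) ->
  X ^+ 2 <= A * B.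
Proof.
move=> hA h; have [A0|Apos] := eqVneq A 0.
  have [X0|Xn] := eqVneq X 0; first by rewrite X0 A0 expr0n mul0r.
  have := h (- (B + 1) / (2 * X)).
  have -> : (- (B + 1) / (2 * X)) ^+ 2 * A + 2 * (- (B + 1) / (2 * X)) * X + B = -1.
    by rewrite A0; field.
  by rewrite -(oppr0) lerN2 ler10.
have hA' : 0 < A by rewrite lt_def Apos hA.
have := mulr_ge0 hA (h (- X / A)).
have -> : A * ((- X / A) ^+ 2 * A + 2 * (- X / A) * X + B) = A * B - X ^+ 2.
  by field.
by rewrite subr_ge0.
Qed.

Lemma core_real (A B A' B' X Y r : R) : 0 < r -> 0 <= A -> 0 <= B -> 0 <= A' -> 0 <= B' ->
  X ^+ 2 <= A * A' -> Y ^+ 2 <= B * B' -> 2 * r <= A - B -> A + B <= r ^+ 2 ->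
  A' + B' <= 1 -> 0 <= (A + 2 * X + A') - (B + 2 * Y + B').
Proof.
move=> hr hA hB hA' hB' hX hY h1 h2 h3.
have [al [hal eA]] : exists al : R, 0 <= al /\ A = al ^+ 2 by exists (Num.sqrt A); rewrite sqrtr_ge0 sqr_sqrtr.
have [be [hbe eB]] : exists al : R, 0 <= al /\ B = al ^+ 2 by exists (Num.sqrt B); rewrite sqrtr_ge0 sqr_sqrtr.
have [al' [hal' eA']] : exists al : R, 0 <= al /\ A' = al ^+ 2 by exists (Num.sqrt A'); rewrite sqrtr_ge0 sqr_sqrtr.
have [be' [hbe' eB']] : exists al : R, 0 <= al /\ B' = al ^+ 2 by exists (Num.sqrt B'); rewrite sqrtr_ge0 sqr_sqrtr.
subst A B A' B'.
rewrite -exprMn in hX; rewrite -exprMn in hY.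
have hX' : - (al * al') <= X.
  have hp : 0 <= al * al' by rewrite mulr_ge0.
  nra.
have hY' : Y <= be * be'.
  have hp : 0 <= be * be' by rewrite mulr_ge0.
  nra.
have hab : be <= al by nra.
have s1 : (al + be) ^+ 2 <= 2 * r ^+ 2 by nra.
have s2 : 2 <= (al - be) ^+ 2.
  have : 4 * r ^+ 2 <= (al - be) ^+ 2 * (al + be) ^+ 2.
    have -> : (al - be) ^+ 2 * (al + be) ^+ 2 = (al ^+ 2 - be ^+ 2) ^+ 2 by ring.
    have hh : 0 <= (al ^+ 2 - be ^+ 2 - 2 * r) * (al ^+ 2 - be ^+ 2 + 2 * r).
      by apply: mulr_ge0; lra.
    nra.
  move=> h4.
  have h5 : (al - be) ^+ 2 * (al + be) ^+ 2 <= (al - be) ^+ 2 * (2 * r ^+ 2).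
    by apply: ler_wpM2l; [apply: sqr_ge0 | exact: s1].
  have hr2 : 0 < r ^+ 2 by apply: exprn_gt0.
  rewrite -(ler_pM2r hr2).
  set Z := (al - be) ^+ 2 in h5 *.
  set W := r ^+ 2 in h4 h5 hr2 *.
  have h6 := le_trans h4 h5.
  lra.
have s3 : (al' + be') ^+ 2 <= 2.
  have := sqr_ge0 (al' - be'); nra.
have s4 : al' + be' <= al - be by nra.
nra.
Qed.
End Real.
Arguments core_real {R} [A B A' B' X Y r].
Section CS.
Variable R : rcfType.
Local Notation C := R[i].
Local Notation nc := (@ComplexField.Normc.normc R).

Definition dotc (z w : C) : R := complex.Re z * complex.Re w + complex.Im z * complex.Im w.

Lemma nc_lin (l : R) (z w : C) :
  nc ((l%:C)%C * z + w) ^+ 2 = l ^+ 2 * nc z ^+ 2 + 2 * l * dotc z w + nc w ^+ 2.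
Proof. rewrite !normc_sq /dotc; case: z => a b; case: w => c d /=; ring. Qed.

Lemma sum_lin n (l : R) (f g : 'I_n -> C) :
  \sum_(t < n) nc ((l%:C)%C * f t + g t) ^+ 2 =
  l ^+ 2 * (\sum_(t < n) nc (f t) ^+ 2) + 2 * l * (\sum_(t < n) dotc (f t) (g t))
  + \sum_(t < n) nc (g t) ^+ 2.
Proof.
rewrite (eq_bigr _ (fun t _ => nc_lin l (f t) (g t))).
by rewrite !big_distrr -!big_split.
Qed.

Lemma sum_add n (f g : 'I_n -> C) :
  \sum_(t < n) nc (f t + g t) ^+ 2 =
  (\sum_(t < n) nc (f t) ^+ 2) + 2 * (\sum_(t < n) dotc (f t) (g t))
  + \sum_(t < n) nc (g t) ^+ 2.
Proof.
rewrite (eq_bigr (fun t => nc ((1%:C)%C * f t + g t) ^+ 2)); last first.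
  by move=> t _; rewrite mul1r.
by rewrite sum_lin expr1n !mul1r mulr1.
Qed.

Lemma sum_cs n (f g : 'I_n -> C) :
  (\sum_(t < n) dotc (f t) (g t)) ^+ 2 <=
  (\sum_(t < n) nc (f t) ^+ 2) * (\sum_(t < n) nc (g t) ^+ 2).
Proof.
apply: disc; first by apply: sumr_ge0 => t _; apply: normc_sq_ge0.
move=> l; rewrite -sum_lin; apply: sumr_ge0 => t _; apply: normc_sq_ge0.
Qed.
End CS.
Arguments dotc {R} z w.
Arguments sum_add {R n} f g.
Arguments sum_cs {R n} f g.
Theorem theorem1 (R : rcfType) (D K k : nat) (U : 'M[R[i]]_(2 ^ (D + K)))
  (p : 'cV[R]_(2 ^ D)) (c c' : 'I_k) :
  (1 <= k <= 2 ^ K)%N ->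
  U \is unitarymx ->
  p != 0 ->
  let ph := normalize p in
  (* c is the class predicted for ph *)
  (forall c2 : 'I_k, prob U ph c2 <= prob U ph c) ->
  (* c' is the runner-up class *)
  c' != c ->
  (forall c2 : 'I_k, c2 != c -> prob U ph c2 <= prob U ph c') ->
  let eps := Num.sqrt (1 + ((2 * 2 ^ D)%:R)^-1
                 * (qform (Mc U c) ph - qform (Mc U c') ph)) - 1 in
  0 < eps ->
  2 / (eps * Num.sqrt (4 - eps ^+ 2)) <= vnorm p ->
  forall x : 'cV[R]_(2 ^ D), vnorm x = 1 ->
  let y := normalize (p + x) in
  forall c2 : 'I_k, prob U y c2 <= prob U y c.
Proof.
move=> hk hU hp0 ph hmax hc' hrun eps heps hbound x hx y c2.
have [->|hc2] := eqVneq c2 c; first exact: lexx.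
have hkK : (k <= 2 ^ K)%N by case/andP: hk.
have hcK : (c < 2 ^ K)%N := leq_trans (ltn_ord c) hkK.
have hc2K : (c2 < 2 ^ K)%N := leq_trans (ltn_ord c2) hkK.
have hcc2 : (c : nat) != c2 by rewrite val_eqE eq_sym.
set Sp := \sum_(s < 2 ^ D) p s 0 ^+ 2.
have hSp : 0 < Sp.
  rewrite lt_def sumr_ge0 ?andbT => [|s _]; last exact: sqr_ge0.
  apply: contra hp0 => /eqP H; apply/eqP/matrixP => i j.
  rewrite ord1 mxE; apply/eqP; rewrite -sqrf_eq0; apply/eqP.
  by apply: (psumr_eq0P _ H) => // s _; apply: sqr_ge0.
set r := vnorm p.
have hr0 : 0 < r by rewrite /r /vnorm sqrtr_gt0.
have hr2 : r ^+ 2 = Sp by rewrite /r /vnorm sqr_sqrtr // ltW.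
have hrn0 : r != 0 by rewrite gt_eqF.
have hpr : p = r *: ph by rewrite /ph /normalize -/r scalerA divff ?scale1r.
have hSph : \sum_(s < 2 ^ D) ph s 0 ^+ 2 = 1.
  rewrite /ph /normalize -/r.
  under eq_bigr => s _ do rewrite mxE exprMn.
  rewrite -big_distrr /= -/Sp -hr2; by field.
have hSx : \sum_(s < 2 ^ D) x s 0 ^+ 2 = 1.
  have h0 : 0 <= \sum_(s < 2 ^ D) x s 0 ^+ 2 by apply: sumr_ge0 => s _; apply: sqr_ge0.
  by rewrite -(sqr_sqrtr h0); move: hx; rewrite /vnorm => ->; rewrite expr1n.
have hprob_p : forall c0, prob U p c0 = r ^+ 2 * prob U ph c0.
  by move=> c0; rewrite {1}hpr probZ.
set Delta := prob U ph c - prob U ph c'.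
have hDelta : qform (Mc U c) ph - qform (Mc U c') ph = Delta by rewrite !qformE.
have hD1 : Delta <= 1.
  have := prob1_le ph c hU; rewrite hSph.
  have := prob_ge0 U ph c'; rewrite /Delta; lra.
have hD2 : prob U ph c - prob U ph c2 >= Delta.
  have := hrun c2 hc2; rewrite /Delta; lra.
set w : R := ((2 * 2 ^ D)%:R)^-1.
have hw0 : 0 < w by rewrite /w invr_gt0 ltr0n muln_gt0 expn_gt0.
have hw1 : w <= 1 / 2.
  have hm : 1 <= (2 ^ D)%:R :> R by rewrite ler1n expn_gt0.
  have e : w * (2 * (2 ^ D)%:R) = 1.
    by rewrite /w natrM mulVf // mulf_neq0 //; rewrite pnatr_eq0 ?expn_eq0.
  nra.
have epsE : eps = Num.sqrt (1 + w * Delta) - 1 by rewrite /eps hDelta.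
have harg : 0 <= 1 + w * Delta.
  case: (leP 0 (1 + w * Delta)) => // hlt.
  by move: heps; rewrite epsE ltr0_sqrtr // sub0r oppr_gt0 ltr10.
have hs : (1 + eps) ^+ 2 = 1 + w * Delta.
  by rewrite epsE addrC subrK sqr_sqrtr.
have hDpos : 2 * (eps ^+ 2 + 2 * eps) <= Delta.
  have e2 : eps ^+ 2 + 2 * eps = w * Delta by rewrite -[w * Delta](addKr 1) -hs; ring.
  have hwD : 0 < w * Delta by rewrite -e2; nra.
  have hD0 : 0 < Delta by move: hwD; rewrite pmulr_rgt0.
  nra.
have heps1 : eps < 1 by nra.
set q4 := Num.sqrt (4 - eps ^+ 2).
have hq4 : 0 < q4 by rewrite /q4 sqrtr_gt0; nra.
have hq4' : q4 <= 2.
  have : q4 ^+ 2 = 4 - eps ^+ 2 by rewrite /q4 sqr_sqrtr //; nra.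
  nra.
have hb : 2 <= r * (eps * q4).
  by move: hbound; rewrite ler_pdivrMr ?mulr_gt0 // mulrC.
have hrD : 2 <= r * Delta.
  have h1 : r * (eps * q4) <= r * (eps * (2 * eps + 4)).
    by apply: ler_wpM2l; [exact: ltW | apply: ler_wpM2l; [exact: ltW | lra]].
  have h2 : r * (2 * (eps ^+ 2 + 2 * eps)) <= r * Delta by apply: ler_wpM2l => //; exact: ltW.
  lra.
set A := prob U p c; set B := prob U p c2.
set A' := prob U x c; set B' := prob U x c2.
have hAB1 : 2 * r <= A - B.
  rewrite /A /B !hprob_p.
  have := ler_wpM2l (ltW hr0) hrD.
  have := ler_wpM2l (sqr_ge0 r) hD2.
  nra.
have hAB2 : A + B <= r ^+ 2 by rewrite hr2; exact: prob2_le p c c2 hcK hc2K hcc2 hU.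
have hAB3 : A' + B' <= 1 by rewrite -hSx; exact: prob2_le x c c2 hcK hc2K hcc2 hU.
pose X c0 := \sum_(t < 2 ^ D) dotc (W U p (2 ^ K * t + c0)) (W U x (2 ^ K * t + c0)).
have dec : forall c0, prob U (p + x) c0 = prob U p c0 + 2 * X c0 + prob U x c0.
  move=> c0; rewrite !probE.
  under eq_bigr => t _ do rewrite WD.
  exact: (sum_add (fun t : 'I_(2 ^ D) => W U p (2 ^ K * t + c0))
                  (fun t : 'I_(2 ^ D) => W U x (2 ^ K * t + c0))).
have cs : forall c0, X c0 ^+ 2 <= prob U p c0 * prob U x c0.
  by move=> c0; rewrite !probE; apply: sum_cs.
have core : 0 <= prob U (p + x) c - prob U (p + x) c2.
  rewrite !dec; apply: (core_real hr0); rewrite ?prob_ge0 //; exact: cs.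
rewrite /y /normalize !probZ; apply: ler_wpM2l; first exact: sqr_ge0.
by rewrite -subr_ge0.
Qed.
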